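(* A formula $\varphi\in\mathcal{L}$ is derivable in $\mathsf{ConstCKID}$ (resp. $\mathsf{ConstCKMP}$, resp. $\mathsf{ConstCKMPID}$) if and only if it is valid in all constructive Chellas models satisfying property (id) (resp. property (mp), resp. both (id) and (mp)), where (id): for all $X\subseteq W$ and $w,v\in W$, if $wR_Xv$ then $v\in X$; (mp): for all $X\subseteq W$ and $w\in W$, if $w\in X$ then $wR_Xw$.
   Context: Language $\mathcal{L}$: formulas $\varphi ::= p \mid \bot \mid \varphi\wedge\varphi \mid \varphi\vee\varphi \mid \varphi\to\varphi \mid \varphi \mathrel{\Box\!\!\to} \varphi \mid \varphi \mathrel{\Diamond\!\!\to}\varphi$; $\neg\varphi:=\varphi\to\bot$, $\top:=\neg\bot$, $\varphi\leftrightarrow\psi:=(\varphi\to\psi)\wedge(\psi\to\varphi)$. $\mathsf{ConstCK}$: any axiomatisation of intuitionistic propositional logic in $\mathcal{L}$ with modus ponens, plus CM$_\Box$: $(\varphi\mathrel{\Box\!\!\to}\psi\wedge\chi)\to(\varphi\mathrel{\Box\!\!\to}\psi)\wedge(\varphi\mathrel{\Box\!\!\to}\chi)$; CC$_\Box$: $(\varphi\mathrel{\Box\!\!\to}\psi)\wedge(\varphi\mathrel{\Box\!\!\to}\chi)\to(\varphi\mathrel{\Box\!\!\to}\psi\wedge\chi)$; CN$_\Box$: $\varphi\mathrel{\Box\!\!\to}\top$; CN$_\Diamond$: $\neg(\varphi\mathrel{\Diamond\!\!\to}\bot)$; CK$_\Diamond$: $(\varphi\mathrel{\Box\!\!\to}(\psi\to\chi))\to((\varphi\mathrel{\Diamond\!\!\to}\psi)\to(\varphi\mathrel{\Diamond\!\!\to}\chi))$;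 rules RA$_\Box$: from $\varphi\leftrightarrow\rho$ infer $(\varphi\mathrel{\Box\!\!\to}\psi)\leftrightarrow(\rho\mathrel{\Box\!\!\to}\psi)$; RC$_\Box$: from $\psi\leftrightarrow\chi$ infer $(\varphi\mathrel{\Box\!\!\to}\psi)\leftrightarrow(\varphi\mathrel{\Box\!\!\to}\chi)$; RA$_\Diamond$, RC$_\Diamond$: the same with $\mathrel{\Diamond\!\!\to}$. $\mathsf{ConstCKID}$ = $\mathsf{ConstCK}$ + ID$_\Box$: $\varphi\mathrel{\Box\!\!\to}\varphi$. $\mathsf{ConstCKMP}$ = $\mathsf{ConstCK}$ + MP$_\Box$: $(\varphi\mathrel{\Box\!\!\to}\psi)\to(\varphi\to\psi)$ + MP$_\Diamond$: $\varphi\wedge\psi\to(\varphi\mathrel{\Diamond\!\!\to}\psi)$. $\mathsf{ConstCKMPID}$ = $\mathsf{ConstCK}$ + MP$_\Box$, MP$_\Diamond$, ID$_\Box$. A constructive Chellas model is $M=\langle W,\le,R,V\rangle$ with $W$ nonempty, $\le$ reflexive and transitive on $W$, $V:W\to2^{Atm}$ monotone ($w\le w'$ implies $V(w)\subseteq V(w')$), and $R$ associating to each $X\subseteq W$ a binary relation $R_X$ on $W$. Satisfaction: $w\Vdash p$ iff $p\in V(w)$; $w\not\Vdash\bot$; $\wedge,\vee$ pointwise; $w\Vdash\varphi\to\psi$ iff for all $w'\ge w$, $w'\Vdash\varphi$ implies $w'\Vdash\psi$; with $[\varphi]=\{w\mid w\Vdash\varphi\}$: $w\Vdash\varphi\mathrel{\Box\!\!\to}\psi$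 iff for all $w',v$ with $w\le w'$ and $w'R_{[\varphi]}v$, $v\Vdash\psi$; $w\Vdash\varphi\mathrel{\Diamond\!\!\to}\psi$ iff for all $w'\ge w$ there is $v$ with $w'R_{[\varphi]}v$ and $v\Vdash\psi$. A formula is valid in $M$ if satisfied at every world. *)

(* Defs.v *)
From Stdlib Require Import Relations.

Inductive form : Type :=
| Var : nat -> form
| Bot : form
| And : form -> form -> form
| Or  : form -> form -> form
| Imp : form -> form -> form
| CBox : form -> form -> form
| CDia : form -> form -> form.

Definition Neg (a : form) : form := Imp a Bot.
Definition Top : form := Neg Bot.
Definition Iff (a b : form) : form := And (Imp a b) (Imp b a).

Inductive deriv (Ax : form -> Prop) : form -> Prop :=
| A1 a b : deriv Ax (Imp a (Imp b a))
| A2 a b c : deriv Ax (Imp (Imp a (Imp b c)) (Imp (Imp a b) (Imp a c)))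
| A3 a b : deriv Ax (Imp (And a b) a)
| A4 a b : deriv Ax (Imp (And a b) b)
| A5 a b : deriv Ax (Imp a (Imp b (And a b)))
| A6 a b : deriv Ax (Imp a (Or a b))
| A7 a b : deriv Ax (Imp b (Or a b))
| A8 a b c : deriv Ax (Imp (Imp a c) (Imp (Imp b c) (Imp (Or a b) c)))
| A9 a : deriv Ax (Imp Bot a)
| CMbox a b c : deriv Ax (Imp (CBox a (And b c)) (And (CBox a b) (CBox a c)))
| CCbox a b c : deriv Ax (Imp (And (CBox a b) (CBox a c)) (CBox a (And b c)))
| CNbox a : deriv Ax (CBox a Top)
| CNdia a : deriv Ax (Neg (CDia a Bot))
| CKdia a b c : deriv Ax (Imp (CBox a (Imp b c)) (Imp (CDia a b) (CDia a c)))
| Extra a : Ax a -> deriv Ax a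
| MP a b : deriv Ax (Imp a b) -> deriv Ax a -> deriv Ax b
| RAbox a r b : deriv Ax (Iff a r) -> deriv Ax (Iff (CBox a b) (CBox r b))
| RCbox a b c : deriv Ax (Iff b c) -> deriv Ax (Iff (CBox a b) (CBox a c))
| RAdia a r b : deriv Ax (Iff a r) -> deriv Ax (Iff (CDia a b) (CDia r b))
| RCdia a b c : deriv Ax (Iff b c) -> deriv Ax (Iff (CDia a b) (CDia a c)).

Definition ax_ID (f : form) : Prop := exists a, f = CBox a a.
Definition ax_MP (f : form) : Prop :=
  (exists a b, f = Imp (CBox a b) (Imp a b)) \/
  (exists a b, f = Imp (And a b) (CDia a b)).
Definition ax_MPID (f : form) : Prop := ax_MP f \/ ax_ID f.

Definition ConstCKID (f : form) : Prop := deriv ax_ID f.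
Definition ConstCKMP (f : form) : Prop := deriv ax_MP f.
Definition ConstCKMPID (f : form) : Prop := deriv ax_MPID f.

Record model : Type := Model {
  W : Type;
  W_inhabited : W;
  le : W -> W -> Prop;
  le_refl : forall w, le w w;
  le_trans : forall u v w, le u v -> le v w -> le u w;
  R : (W -> Prop) -> W -> W -> Prop;
  V : W -> nat -> Prop;
  V_mono : forall w w' p, le w w' -> V w p -> V w' p
}.

Fixpoint sat (M : model) (w : W M) (f : form) {struct f} : Prop :=
  match f with
  | Var p => V M w p
  | Bot => False
  | And a b => sat M w a /\ sat M w b
  | Or a b => sat M w a \/ sat M w b
  | Imp a b => forall w', le M w w' -> sat M w' a -> sat M w' b
  | CBox a b => forall w' v, le M w w' -> R M (fun u => sat M u a) w' v -> sat M v b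
  | CDia a b => forall w', le M w w' ->
                  exists v, R M (fun u => sat M u a) w' v /\ sat M v b
  end.

Definition valid_in (M : model) (f : form) : Prop := forall w : W M, sat M w f.

Definition prop_id (M : model) : Prop :=
  forall (X : W M -> Prop) (w v : W M), R M X w v -> X v.
Definition prop_mp (M : model) : Prop :=
  forall (X : W M -> Prop) (w : W M), X w -> R M X w w.

(* Main.v *)
Require Import Defs.
From Stdlib Require Import List Arith Lia Classical ClassicalEpsilon FunctionalExtensionality PropExtensionality.
From Stdlib Require Cantor.
Import ListNotations.

Fixpoint L (n : nat) : list form :=
  match n with
  | 0 => [Bot; Var 0]
  | S n => Bot :: Var (S n) :: L n ++
      flat_map (fun p => [And (fst p) (snd p); Or (fst p) (snd p); Imp (fst p) (snd p);
                          CBox (fst p) (snd p); CDia (fst p) (snd p)]) (list_prod (L n) (L n))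
  end.

Lemma L_mono : forall n m f, n <= m -> In f (L n) -> In f (L m).
Proof.
  intros n m f H. induction H; intros Hi; auto.
  simpl. right. right. apply in_or_app. left. auto.
Qed.

Lemma L_bin : forall n a b, In a (L n) -> In b (L n) ->
  In (And a b) (L (S n)) /\ In (Or a b) (L (S n)) /\ In (Imp a b) (L (S n)) /\
  In (CBox a b) (L (S n)) /\ In (CDia a b) (L (S n)).
Proof.
  intros n a b Ha Hb. simpl.
  assert (Hp : In (a, b) (list_prod (L n) (L n))) by (apply in_prod; auto).
  repeat split; right; right; apply in_or_app; right; apply in_flat_map;
    exists (a, b); split; simpl; tauto.
Qed.

Lemma L_all : forall f, exists n, In f (L n).
Proof.
  induction f.
  exists n. destruct n; simpl; tauto.
  exists 0. simpl; tauto.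
  all: destruct IHf1 as [n1 H1]; destruct IHf2 as [n2 H2];
    exists (S (max n1 n2));
    assert (H1' := L_mono n1 (max n1 n2) _ (Nat.le_max_l _ _) H1);
    assert (H2' := L_mono n2 (max n1 n2) _ (Nat.le_max_r _ _) H2);
    destruct (L_bin _ _ _ H1' H2') as (?&?&?&?&?); assumption.
Qed.

Definition enum (n : nat) : form :=
  let p := Cantor.of_nat n in nth (snd p) (L (fst p)) Bot.

Lemma enum_surj : forall f, exists n, enum n = f.
Proof.
  intro f. destruct (L_all f) as [a Ha].
  destruct (In_nth _ _ Bot Ha) as [b [_ Hb]].
  exists (Cantor.to_nat (a, b)). unfold enum. rewrite Cantor.cancel_of_to. simpl. auto.
Qed.
Section Prv.
Variable Ax : form -> Prop.

Inductive prv (G : form -> Prop) : form -> Prop :=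
| pHyp a : G a -> prv G a
| pThm a : deriv Ax a -> prv G a
| pMP a b : prv G (Imp a b) -> prv G a -> prv G b.

Definition ext (G : form -> Prop) (a : form) : form -> Prop := fun x => G x \/ x = a.

Lemma d_id a : deriv Ax (Imp a a).
Proof.
  eapply MP. eapply MP. apply (A2 Ax a (Imp a a) a). apply A1. apply (A1 Ax a a).
Qed.

Lemma prv_mono G H a : (forall x, G x -> H x) -> prv G a -> prv H a.
Proof. intros HGH P. induction P. apply pHyp; auto. apply pThm; auto. eapply pMP; eauto. Qed.

Lemma deduction G a b : prv (ext G a) b -> prv G (Imp a b).
Proof.
  intro P. induction P.
  - destruct H as [H|H].
    + eapply pMP. apply pThm, A1. apply pHyp; auto.
    + subst. apply pThm, d_id.
  - eapply pMP. apply pThm, A1. apply pThm; auto.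
  - eapply pMP. eapply pMP. apply pThm, A2. eauto. eauto.
Qed.

Lemma prv_empty a : prv (fun _ => False) a -> deriv Ax a.
Proof. intro P. induction P. contradiction. auto. eapply MP; eauto. Qed.

Lemma prv_ext G a : prv (ext G a) a.
Proof. apply pHyp. right. auto. Qed.
Lemma prv_extG G a b : G b -> prv (ext G a) b.
Proof. intro. apply pHyp. left. auto. Qed.

Lemma d_ax G a : prv (ext G a) a.
Proof. apply prv_ext. Qed.

Section Lind.
Variable G : form -> Prop.
Variable d : form.
Hypothesis Hnot : ~ prv G d.

Fixpoint chain (n : nat) : form -> Prop :=
  match n with
  | 0 => G
  | S n => fun x => chain n x \/ (x = enum n /\ ~ prv (ext (chain n) (enum n)) d)
  end.

Definition Sig : form -> Prop := fun x => exists n, chain n x.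

Lemma chain_mono n m x : n <= m -> chain n x -> chain m x.
Proof. intro H. induction H; auto. intro. simpl. left. auto. Qed.

Lemma chain_ok n : ~ prv (chain n) d.
Proof.
  induction n; simpl; auto.
  destruct (classic (prv (ext (chain n) (enum n)) d)) as [Hc|Hc].
  - intro P. apply IHn. eapply prv_mono; [|exact P]. intros x [Hx|[_ Hx]]; tauto.
  - intro P. apply Hc. eapply prv_mono; [|exact P]. intros x [Hx|[Hx _]]; [left|right]; auto.
Qed.

Lemma compact a : prv Sig a -> exists n, prv (chain n) a.
Proof.
  intro P. induction P.
  - destruct H as [n Hn]. exists n. apply pHyp; auto.
  - exists 0. apply pThm; auto.
  - destruct IHP1 as [n1 H1]. destruct IHP2 as [n2 H2]. exists (max n1 n2).
    eapply pMP.
    + eapply prv_mono; [|exact H1]. intros; eapply chain_mono; [|eauto]. lia.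
    + eapply prv_mono; [|exact H2]. intros; eapply chain_mono; [|eauto]. lia.
Qed.

Lemma Sig_not : ~ prv Sig d.
Proof. intro P. destruct (compact _ P) as [n Hn]. exact (chain_ok n Hn). Qed.

Lemma Sig_closed a : prv Sig a -> Sig a.
Proof.
  intro P. destruct (enum_surj a) as [n Hn]. exists (S n). simpl. right. split; auto.
  subst a. intro Q. apply Sig_not. eapply pMP; [|exact P].
  apply deduction. eapply prv_mono; [|exact Q].
  intros x [Hx|Hx]; [left; exists n; auto | right; auto].
Qed.

Lemma Sig_key a : ~ Sig a -> prv (ext Sig a) d.
Proof.
  intro Hn. destruct (enum_surj a) as [n Hn']. subst a.
  apply NNPP. intro Q. apply Hn. exists (S n). simpl. right. split; auto.
  intro Q'. apply Q. eapply prv_mono; [|exact Q'].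
  intros x [Hx|Hx]; [left; exists n; auto | right; auto].
Qed.

Lemma Sig_prime a b : Sig (Or a b) -> Sig a \/ Sig b.
Proof.
  intro H. apply NNPP. intro Hn. apply Sig_not.
  assert (Ha : ~ Sig a) by tauto. assert (Hb : ~ Sig b) by tauto.
  apply Sig_key, deduction in Ha. apply Sig_key, deduction in Hb.
  eapply pMP; [|apply pHyp; exact H].
  eapply pMP; [eapply pMP; [apply pThm, A8|exact Ha]|exact Hb].
Qed.

Lemma Sig_cons : ~ Sig Bot.
Proof. intro H. apply Sig_not. eapply pMP. apply pThm, A9. apply pHyp; auto. Qed.

Lemma Sig_incl x : G x -> Sig x.
Proof. intro. exists 0. auto. Qed.

Lemma Sig_notd : ~ Sig d.
Proof. intro H. apply Sig_not. apply pHyp; auto. Qed.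
End Lind.

Definition ptheory (S : form -> Prop) : Prop :=
  (forall a, prv S a -> S a) /\ ~ S Bot /\ (forall a b, S (Or a b) -> S a \/ S b).

Lemma lindenbaum G d : ~ prv G d ->
  exists S, ptheory S /\ (forall x, G x -> S x) /\ ~ S d.
Proof.
  intro H. exists (Sig G d). split; [split; [|split]|split].
  - apply Sig_closed; auto.
  - apply Sig_cons; auto.
  - apply Sig_prime; auto.
  - apply Sig_incl.
  - apply Sig_notd; auto.
Qed.

End Prv.
Section Canon.
Variable Ax : form -> Prop.

Lemma th_thm S a : ptheory Ax S -> deriv Ax a -> S a.
Proof. intros [H _] D. apply H. apply pThm. auto. Qed.

Lemma th_mp S a b : ptheory Ax S -> S (Imp a b) -> S a -> S b.
Proof. intros [H _] H1 H2. apply H. eapply pMP; apply pHyp; eauto. Qed.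

Lemma th_dmp S a b : ptheory Ax S -> deriv Ax (Imp a b) -> S a -> S b.
Proof. intros. eapply th_mp; eauto. apply th_thm; auto. Qed.

Lemma d_mp a b : deriv Ax (Imp a b) -> deriv Ax a -> deriv Ax b.
Proof. intros; eapply MP; eauto. Qed.

Lemma d_iff_intro a b : deriv Ax (Imp a b) -> deriv Ax (Imp b a) -> deriv Ax (Iff a b).
Proof. intros. unfold Iff. eapply d_mp; [eapply d_mp; [apply A5|]|]; eauto. Qed.
Lemma d_iff_l a b : deriv Ax (Iff a b) -> deriv Ax (Imp a b).
Proof. intros. eapply d_mp; [apply A3|]; eauto. Qed.
Lemma d_iff_r a b : deriv Ax (Iff a b) -> deriv Ax (Imp b a).
Proof. intros. eapply d_mp; [apply A4|]; eauto. Qed.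

Lemma th_and S a b : ptheory Ax S -> (S (And a b) <-> S a /\ S b).
Proof.
  intro H. split.
  - intro. split; eapply th_dmp; eauto; [apply A3|apply A4].
  - intros [H1 H2]. apply (th_mp S b); auto. apply (th_dmp S a); auto. apply A5.
Qed.

Lemma th_or S a b : ptheory Ax S -> (S (Or a b) <-> S a \/ S b).
Proof.
  intro H. split.
  - destruct H as (_&_&H). auto.
  - intros [H1|H1]; eapply th_dmp; eauto; [apply A6|apply A7].
Qed.

Lemma d_nec p a : deriv Ax a -> deriv Ax (CBox p a).
Proof.
  intro D. assert (Hi : deriv Ax (Iff a Top)).
  { apply d_iff_intro. eapply d_mp; [apply A1|]. apply d_id.
    eapply d_mp; [apply A1|]. auto. }
  eapply d_mp; [apply d_iff_r; apply RCbox; exact Hi|]. apply CNbox.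
Qed.

Lemma th_K S p a b : ptheory Ax S -> S (CBox p (Imp a b)) -> S (CBox p a) -> S (CBox p b).
Proof.
  intros HS H1 H2.
  assert (H3 : S (CBox p (And (Imp a b) a))).
  { apply (th_dmp S (And (CBox p (Imp a b)) (CBox p a))); auto. apply CCbox. apply th_and; auto. }
  assert (Hi : deriv Ax (Iff (And (Imp a b) a) (And (And (Imp a b) a) b))).
  { apply d_iff_intro; [|apply A3].
    apply prv_empty. apply deduction.
    assert (P1 : prv Ax (ext (fun _ => False) (And (Imp a b) a)) (Imp a b)).
    { eapply pMP. apply pThm, A3. apply prv_ext. }
    assert (P2 : prv Ax (ext (fun _ => False) (And (Imp a b) a)) a).
    { eapply pMP. apply pThm, A4. apply prv_ext. }
    eapply pMP; [eapply pMP; [apply pThm, A5|apply prv_ext]|]. eapply pMP; eauto. }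
  assert (H4 : S (CBox p (And (And (Imp a b) a) b))).
  { eapply th_dmp; eauto. apply d_iff_l. apply RCbox. exact Hi. }
  apply (th_dmp S _ (And (CBox p (And (Imp a b) a)) (CBox p b))) in H4; auto; [|apply CMbox]. apply th_and in H4; tauto.
Qed.

Lemma th_boxset S p c : ptheory Ax S -> prv Ax (fun x => S (CBox p x)) c -> S (CBox p c).
Proof.
  intros HS P. induction P; auto.
  - apply th_thm; auto. apply d_nec; auto.
  - eapply th_K; eauto.
Qed.

Record cw : Type := CW {
  th : form -> Prop;
  nu : form -> form;
  th_pt : ptheory Ax th;
  nu_ok : forall p, ~ th (CDia p (nu p))
}.

Lemma bot_ok S : ptheory Ax S -> forall p, ~ S (CDia p Bot).
Proof.
  intros HS p H. destruct HS as (H1&H2&H3). apply H2.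
  eapply th_mp; [split; eauto| |exact H]. apply th_thm. split; eauto. apply CNdia.
Qed.

Definition mkw S (HS : ptheory Ax S) : cw := CW S (fun _ => Bot) HS (bot_ok S HS).

Lemma lind_w G d : ~ prv Ax G d -> exists w : cw, (forall x, G x -> th w x) /\ ~ th w d.
Proof.
  intro H. destruct (lindenbaum Ax G d H) as (S&HS&H1&H2). exists (mkw S HS). simpl. auto.
Qed.

Lemma same_imp a b : (forall z : cw, th z a -> th z b) -> deriv Ax (Imp a b).
Proof.
  intro H. apply NNPP. intro Hn.
  assert (Hp : ~ prv Ax (ext (fun _ => False) a) b).
  { intro P. apply Hn. apply prv_empty. apply deduction. auto. }
  destruct (lind_w _ _ Hp) as (w&H1&H2). apply H2, H, H1. right; auto.
Qed.

Lemma same_iff a b : (forall z : cw, th z a <-> th z b) -> deriv Ax (Iff a b).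
Proof. intro H. apply d_iff_intro; apply same_imp; intro z; apply H. Qed.

Variable m : Prop.
Variable w0 : cw.

Definition cle (u v : cw) : Prop := forall f, th u f -> th v f.
Definition cR (X : cw -> Prop) (u v : cw) : Prop :=
  (exists p, (forall z, X z <-> th z p) /\ (forall q, th u (CBox p q) -> th v q) /\ ~ th v (nu u p))
  \/ (m /\ X u /\ v = u).

Definition canon : model.
Proof.
  refine (Model cw w0 cle _ _ cR (fun u p => th u (Var p)) _).
  - intros w f; auto.
  - intros u v w H1 H2 f Hf; auto.
  - intros w w' p H1 H2; auto.
Defined.

Hypothesis HMP : m -> (forall a b, Ax (Imp (CBox a b) (Imp a b))) /\
                       (forall a b, Ax (Imp (And a b) (CDia a b))).

Lemma truth : forall f (w : cw), sat canon w f <-> th w f.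
Proof.
  induction f; intro w; simpl.
  - tauto.
  - split; [tauto|]. apply (th_pt w).
  - rewrite IHf1, IHf2. symmetry. apply th_and, th_pt.
  - rewrite IHf1, IHf2. symmetry. apply th_or, th_pt.
  - split.
    + intro H. apply NNPP. intro Hn.
      assert (Hp : ~ prv Ax (ext (th w) f1) f2).
      { intro P. apply Hn. apply (th_pt w). apply deduction. auto. }
      destruct (lind_w _ _ Hp) as (w'&H1&H2).
      apply H2. apply IHf2. apply H. intros x Hx; apply H1; left; auto.
      apply IHf1. apply H1. right. auto.
    + intros H w' Hle H1. apply IHf2. apply IHf1 in H1.
      eapply th_mp; [apply th_pt| |exact H1]. apply Hle; auto.
  - split.
    + intro H. apply NNPP. intro Hn.
      assert (Hp : ~ prv Ax (fun x => th w (CBox f1 x)) f2).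
      { intro P. apply Hn. apply th_boxset; auto. apply th_pt. }
      destruct (lind_w _ _ Hp) as (v&H1&H2).
      apply H2. apply IHf2.
      apply (H (mkw (th w) (th_pt w)) v). intros x Hx; auto.
      left. exists f1. simpl. split; [intro z; apply IHf1|split; auto].
      apply (th_pt v).
    + intros H w' v Hle [(p&Hp&Hb&_)|(Hm&Hx&->)].
      * apply IHf2. apply Hb.
        assert (Hi : deriv Ax (Iff f1 p)).
        { apply same_iff. intro z. rewrite <- IHf1. apply Hp. }
        eapply th_dmp; [apply th_pt| |]. apply d_iff_l. apply RAbox. exact Hi. apply Hle; auto.
      * apply IHf2. apply IHf1 in Hx. destruct (HMP Hm) as [Hb _].
        eapply th_mp; [apply th_pt| |exact Hx].
        eapply th_dmp; [apply th_pt|apply Extra, Hb|]. apply Hle; auto.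
  - split.
    + intro H. apply NNPP. intro Hn.
      set (nu' := fun q => if excluded_middle_informative (deriv Ax (Iff q f1)) then f2 else Bot).
      assert (Hok : forall q, ~ th w (CDia q (nu' q))).
      { intros q Hq. unfold nu' in Hq. destruct (excluded_middle_informative (deriv Ax (Iff q f1))) as [D|D].
        - apply Hn. eapply th_dmp; [apply th_pt| |exact Hq]. apply d_iff_l, RAdia, D.
        - eapply bot_ok; [apply th_pt|exact Hq]. }
      destruct (H (CW (th w) nu' (th_pt w) Hok)) as (v&HR&Hv).
      { intros x Hx; auto. }
      apply IHf2 in Hv. destruct HR as [(p&Hp&_&Hnu)|(Hm&Hx&Hv')].
      * simpl in Hnu. unfold nu' in Hnu.
        destruct (excluded_middle_informative (deriv Ax (Iff p f1))) as [D|D].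
        -- auto.
        -- apply D. apply same_iff. intro z. rewrite <- IHf1. symmetry. apply Hp.
      * subst v. simpl in Hv, Hx. apply IHf1 in Hx. apply Hn. destruct (HMP Hm) as [_ Hd].
        eapply th_dmp; [apply th_pt|apply Extra, Hd|]. apply th_and; [apply th_pt|]. auto.
    + intros H w' Hle.
      assert (H' : th w' (CDia f1 f2)) by (apply Hle; auto).
      assert (Hp : ~ prv Ax (ext (fun x => th w' (CBox f1 x)) f2) (nu w' f1)).
      { intro P. apply deduction in P. apply (th_boxset _ _ _ (th_pt w')) in P.
        apply (nu_ok w' f1). eapply th_mp; [apply th_pt| |exact H'].
        eapply th_dmp; [apply th_pt|apply CKdia|exact P]. }
      destruct (lind_w _ _ Hp) as (v&H1&H2). exists v. split.
      * left. exists f1. split; [intro z; apply IHf1|split].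
        -- intros q Hq. apply H1. left. auto.
        -- auto.
      * apply IHf2. apply H1. right. auto.
Qed.

End Canon.
Lemma persist (M : model) : forall f (w w' : W M), le M w w' -> sat M w f -> sat M w' f.
Proof.
  induction f; intros w w' Hle H; simpl in *.
  - eapply V_mono; eauto.
  - auto.
  - destruct H; split; eauto.
  - destruct H; [left|right]; eauto.
  - intros w2 H2. apply H. eapply le_trans; eauto.
  - intros w2 v H2. apply H. eapply le_trans; eauto.
  - intros w2 H2. apply H. eapply le_trans; eauto.
Qed.

Lemma valid_iff (M : model) a b : valid_in M (Iff a b) -> forall u, sat M u a <-> sat M u b.
Proof.
  intros H u. destruct (H u) as [H1 H2]. split; intro; [apply H1|apply H2]; auto; apply le_refl.
Qed.

Lemma sound (Ax : form -> Prop) (M : model) :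
  (forall a, Ax a -> valid_in M a) -> forall f, deriv Ax f -> valid_in M f.
Proof.
  intros HAx f D. induction D; intro w; simpl.
  - intros w1 _ H1 w2 H2 _. eapply persist; eauto.
  - intros w1 _ H1 w2 H2 H3 w3 H4 H5.
    assert (H6 := H1 w3 (le_trans _ _ _ _ H2 H4) H5). apply (H6 w3 (le_refl _ _)).
    apply H3; auto.
  - intros; tauto.
  - intros; tauto.
  - intros w1 _ H1 w2 H2 H3. split; auto. eapply persist; eauto.
  - intros; tauto.
  - intros; tauto.
  - intros w1 _ H1 w2 H2 H3 w3 H4 [H5|H5].
    + apply (H1 w3); auto. eapply le_trans; eauto.
    + apply (H3 w3); auto.
  - intros; tauto.
  - intros w1 _ H1. split; intros w2 v H2 H3; apply (H1 w2 v H2 H3).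
  - intros w1 _ [H1 H2] w2 v H3 H4. split; [apply (H1 w2 v)|apply (H2 w2 v)]; auto.
  - intros w1 v _ _ w2 _ H2. exact H2.
  - intros w1 _ H1. destruct (H1 w1 (le_refl _ _)) as (v&_&[]).
  - intros w1 _ H1 w2 H2 H3 w3 H4. destruct (H3 w3 H4) as (v&Hv&Hb).
    exists v. split; auto. apply (H1 w3 v); auto. eapply le_trans; eauto. apply le_refl.
  - apply HAx; auto.
  - apply (IHD1 w w (le_refl _ _)). apply IHD2.

  - assert (E : (fun u => sat M u a) = (fun u => sat M u r)).
    { apply functional_extensionality. intro u. apply propositional_extensionality.
      apply valid_iff; auto. }
    rewrite E. split; intros w1 _ H1; exact H1.
  - assert (E : forall u, sat M u b <-> sat M u c) by (apply valid_iff; auto).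
    split; intros w1 _ H1 w2 v H2 H3; apply E; eapply H1; eauto.
  - assert (E : (fun u => sat M u a) = (fun u => sat M u r)).
    { apply functional_extensionality. intro u. apply propositional_extensionality.
      apply valid_iff; auto. }
    rewrite E. split; intros w1 _ H1; exact H1.
  - assert (E : forall u, sat M u b <-> sat M u c) by (apply valid_iff; auto).
    split; intros w1 _ H1 w2 H2; destruct (H1 w2 H2) as (v&Hv&Hb); exists v; split; auto; apply E; auto.
Qed.

Lemma compl (Ax : form -> Prop) (m : Prop)
  (HMP : m -> (forall a b, Ax (Imp (CBox a b) (Imp a b))) /\
              (forall a b, Ax (Imp (And a b) (CDia a b))))
  (P : model -> Prop) (HP : forall w0, P (canon Ax m w0)) f :
  (forall M, P M -> valid_in M f) -> deriv Ax f.
Proof.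
  intro H. apply NNPP. intro Hn.
  assert (Hp : ~ prv Ax (fun _ => False) f) by (intro Q; apply Hn, prv_empty, Q).
  destruct (lind_w Ax _ _ Hp) as (w&_&H2). apply H2.
  apply (truth Ax m w HMP). apply H. apply HP.
Qed.

Lemma canon_id Ax m w0 : (forall a, Ax (CBox a a)) -> prop_id (canon Ax m w0).
Proof.
  intros HA X u v [(p&Hp&Hb&_)|(_&Hx&->)]; auto.
  apply Hp. apply Hb. apply (th_thm Ax). apply th_pt. apply Extra. auto.
Qed.

Lemma canon_mp Ax w0 : prop_mp (canon Ax True w0).
Proof. intros X u Hx. right. auto. Qed.

Lemma ID_valid (M : model) : prop_id M -> forall a, valid_in M (CBox a a).
Proof. intros H a w w' v _ HR. exact (H _ _ _ HR). Qed.

Lemma MP_valid (M : model) : prop_mp M -> forall a b,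
  valid_in M (Imp (CBox a b) (Imp a b)) /\ valid_in M (Imp (And a b) (CDia a b)).
Proof.
  intros H a b. split; intro w; simpl.
  - intros w1 _ H1 w2 H2 H3. apply (H1 w2 w2 H2). apply H. auto.
  - intros w1 _ [H1 H2] w2 H3. exists w2. split.
    apply H. eapply persist; eauto. eapply persist; eauto.
Qed.

Theorem theorem12 :
  (forall f : form,
     ConstCKID f <-> (forall M : model, prop_id M -> valid_in M f)) /\
  (forall f : form,
     ConstCKMP f <-> (forall M : model, prop_mp M -> valid_in M f)) /\
  (forall f : form,
     ConstCKMPID f <-> (forall M : model, prop_id M -> prop_mp M -> valid_in M f)).
Proof.
  split; [|split]; intro f; split.
  - intros D M HM. eapply sound; [|exact D]. intros a [b ->]. apply ID_valid; auto.
  - intro H. apply (compl ax_ID False (fun x => False_ind _ x) prop_id).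
    + intro w0. apply canon_id. intro a. exists a. auto.
    + auto.
  - intros D M HM. eapply sound; [|exact D].
    intros a [(b&c&->)|(b&c&->)]; apply MP_valid; auto.
  - intro H. apply (compl ax_MP True) with (P := prop_mp).
    + intros _. split; intros a b; [left|right]; exists a, b; auto.
    + apply canon_mp.
    + auto.
  - intros D M HI HM. eapply sound; [|exact D].
    intros a [[(b&c&->)|(b&c&->)]|[b ->]]; try apply MP_valid; auto. apply ID_valid; auto.
  - intro H. apply (compl ax_MPID True) with (P := fun M => prop_id M /\ prop_mp M).
    + intros _. split; intros a b; left; [left|right]; exists a, b; auto.
    + intro w0. split; [apply canon_id|apply canon_mp]. intro a. right. exists a. auto.
    + intros M [H1 H2]. auto.
Qed.
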